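(* Let $\mathcal{A}\in\mathbb{R}^{n_1\times n_2\times n_3}$, let $q\in\mathbb{N}$, and let $\mathcal{B}\in\mathbb{R}^{n_2\times s\times n_3}$. Let $\mathcal{Q}\in\mathbb{R}^{n_1\times m\times n_3}$, with $\mathcal{Q}^\top*\mathcal{Q}=\mathcal{I}$, be an orthonormal basis (the T-QR orthonormal factor) of $$\mathcal{K}=[\mathcal{A}*\mathcal{B},\ (\mathcal{A}*\mathcal{A}^\top)*\mathcal{A}*\mathcal{B},\ldots,(\mathcal{A}*\mathcal{A}^\top)^q*\mathcal{A}*\mathcal{B}].$$ Let $\mathcal{C}=\mathcal{Q}^\top*\mathcal{A}$, let $\mathcal{C}=\mathcal{U}_C*\mathcal{S}_C*\mathcal{V}_C^\top$ be its T-SVD, and let $\widehat{\mathcal{U}}=\mathcal{Q}*\mathcal{U}_C$. For $k\le m$ let $\widehat{\mathcal{U}}_k=\widehat{\mathcal{U}}(:,1:k,:)$ be its first $k$ lateral slices. Then $$\|\mathcal{A}-\widehat{\mathcal{U}}_k*\widehat{\mathcal{U}}_k^\top*\mathcal{A}\|_F^2\le \|\mathcal{A}_k-\mathcal{Q}*\mathcal{Q}^\top*\mathcal{A}_k\|_F^2+\|\mathcal{A}_{k,\perp}\|_F^2.$$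
   Context: For a real tensor $\mathcal{X}\in\mathbb{R}^{n_1\times n_2\times n_3}$ with frontal slices $X^{(k)}$: - $\mathtt{bcirc}(\mathcal{X})$ is the $n_1n_3\times n_2n_3$ block circulant matrix with first block column $X^{(1)},\dots,X^{(n_3)}$. $\mathtt{unfold}$ stacks the frontal slices vertically and $\mathtt{fold}$ inverts it. - The T-product is $\mathcal{X}*\mathcal{Y}=\mathtt{fold}(\mathtt{bcirc}(\mathcal{X})\mathtt{unfold}(\mathcal{Y}))$. - The transpose $\mathcal{X}^\top$ has slices $(X^{(1)})^\top$ and $\mathcal{X}^\top(:,:,k)=(X^{(n_3+2-k)})^\top$ for $k\ge 2$. - $\mathcal{I}$ is the identity tensor (first frontal slice an identity matrix, others zero). Orthogonal tensors $\mathcal{U}$ satisfy $\mathcal{U}^\top*\mathcal{U}=\mathcal{U}*\mathcal{U}^\top=\mathcal{I}$. Powers are repeated T-products. - $[\cdot,\ldots,\cdot]$ is concatenation along the second mode. - $\|\mathcal{X}\|_F$ is the square root of the sum of squared entries. - The T-SVD $\mathcal{X}=\mathcal{U}*\mathcal{S}*\mathcal{V}^\top$ (with $\mathcal{U},\mathcal{V}$ orthogonal and $\mathcal{S}$ f-diagonal, i.e. every frontal slice diagonal) is computed by applying the DFT along the third mode, taking an SVD of each frontal slice with singular values in nonincreasing order, and transforming back. - For $\mathcal{A}=\mathcal{U}*\mathcal{S}*\mathcal{V}^\top$ the tubal-rank-$k$ truncation is $\mathcal{A}_k=\mathcal{U}(:,1:k,:)*\mathcal{S}(1:k,1:k,:)*\mathcal{V}(:,1:k,:)^\top$,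 and $\mathcal{A}_{k,\perp}=\mathcal{A}-\mathcal{A}_k=\mathcal{U}(:,k+1:n_1,:)*\mathcal{S}(k+1:n_1,k+1:n_2,:)*\mathcal{V}(:,k+1:n_2,:)^\top$. *)

(* Defs.v *)
From HB Require Import structures.
From mathcomp Require Import all_boot all_order all_algebra.
From mathcomp Require Import reals trigo.
From mathcomp.real_closed Require Import complex.

Set Implicit Arguments.
Unset Strict Implicit.
Unset Printing Implicit Defensive.

Import Order.TTheory GRing.Theory Num.Theory.
Local Open Scope ring_scope.

Definition tensor (R : Type) (n1 n2 n3 : nat) := {ffun 'I_n3 -> 'M[R]_(n1, n2)}.

Section Tensors.
Variable R : realType.

Lemma ord_pos (n : nat) (k : 'I_n) : (0 < n)%N.
Proof. exact: leq_ltn_trans (leq0n k) (ltn_ord k). Qed.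

Definition ordsub (n : nat) (k l : 'I_n) : 'I_n :=
  Ordinal (ltn_pmod (k + n - l) (ord_pos k)).

Definition ordneg (n : nat) (k : 'I_n) : 'I_n :=
  Ordinal (ltn_pmod (n - k) (ord_pos k)).

(* T-product: X * Y = fold (bcirc X * unfold Y); slice k is
   sum_l X^(k - l mod n3) Y^(l). *)
Definition tmul (n1 n2 n4 n3 : nat) (X : tensor R n1 n2 n3) (Y : tensor R n2 n4 n3)
  : tensor R n1 n4 n3 :=
  [ffun k => \sum_(l < n3) (X (ordsub k l) *m Y l)].

Definition ttr (n1 n2 n3 : nat) (X : tensor R n1 n2 n3) : tensor R n2 n1 n3 :=
  [ffun k => (X (ordneg k))^T].

Definition tid (n n3 : nat) : tensor R n n n3 :=
  [ffun k => if val k == 0%N then 1%:M else 0].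

Definition torthogonal (n n3 : nat) (U : tensor R n n n3) : Prop :=
  tmul (ttr U) U = tid n n3 /\ tmul U (ttr U) = tid n n3.

Fixpoint tpow (n n3 : nat) (X : tensor R n n n3) (p : nat) : tensor R n n n3 :=
  match p with
  | 0%N => tid n n3
  | p'.+1 => tmul X (tpow X p')
  end.

Definition tadd (n1 n2 n3 : nat) (X Y : tensor R n1 n2 n3) : tensor R n1 n2 n3 :=
  [ffun k => X k + Y k].
Definition tsub (n1 n2 n3 : nat) (X Y : tensor R n1 n2 n3) : tensor R n1 n2 n3 :=
  [ffun k => X k - Y k].

Definition tfrob (n1 n2 n3 : nat) (X : tensor R n1 n2 n3) : R :=
  Num.sqrt (\sum_(k < n3) \sum_(i < n1) \sum_(j < n2) (X k i j) ^+ 2).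

Definition fdiagonal (n1 n2 n3 : nat) (S : tensor R n1 n2 n3) : Prop :=
  forall k (i : 'I_n1) (j : 'I_n2), val i != val j -> S k i j = 0.

Definition fuppertri (n1 n2 n3 : nat) (S : tensor R n1 n2 n3) : Prop :=
  forall k (i : 'I_n1) (j : 'I_n2), (val j < val i)%N -> S k i j = 0.

Definition tconcat (n1 s n3 p : nat) (F : 'I_p -> tensor R n1 s n3)
  : tensor R n1 (\sum_(j < p) s) n3 :=
  [ffun k => \mxrow_(j < p) (F j k)].

Definition tfirst (n1 m n3 k : nat) (hk : (k <= m)%N) (X : tensor R n1 m n3)
  : tensor R n1 k n3 :=
  [ffun l => \matrix_(i < n1, j < k) X l i (widen_ord hk j)].

(* DFT along the third mode: Xhat^(j) = sum_l w^(j l) X^(l), w = exp(-2 pi i / n3) *)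
Local Open Scope complex_scope.
Definition omega (n3 : nat) : R[i] := cos (2 * pi / n3%:R) -i* sin (2 * pi / n3%:R).

Definition tdft (n1 n2 n3 : nat) (X : tensor R n1 n2 n3) : 'I_n3 -> 'M[R[i]]_(n1, n2) :=
  fun j => \sum_(l < n3) (omega n3 ^+ (j * l)%N) *: map_mx (fun x => x%:C) (X l).
Local Close Scope complex_scope.

(* T-SVD: X = U * S * V^T with U, V orthogonal, S f-diagonal, and in every
   Fourier slice the diagonal entries (singular values) are nonnegative reals in
   nonincreasing order (order of R[i]: z <= w iff w - z is a nonnegative real). *)
Definition is_tsvd (n1 n2 n3 : nat) (X : tensor R n1 n2 n3)
  (U : tensor R n1 n1 n3) (S : tensor R n1 n2 n3) (V : tensor R n2 n2 n3) : Prop :=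
  [/\ torthogonal U, torthogonal V, fdiagonal S,
      X = tmul (tmul U S) (ttr V) &
      forall (f : 'I_n3) (i1 i2 : 'I_n1) (j1 j2 : 'I_n2),
        val i1 = val j1 -> val i2 = val j2 -> (val i1 <= val i2)%N ->
        0 <= tdft S f i2 j2 /\ tdft S f i2 j2 <= tdft S f i1 j1].

(* S restricted to S(1:k, 1:k, :), padded with zeros to its original size;
   U * tmask k S * V^T = U(:,1:k,:) * S(1:k,1:k,:) * V(:,1:k,:)^T *)
Definition tmask (n1 n2 n3 : nat) (k : nat) (S : tensor R n1 n2 n3) : tensor R n1 n2 n3 :=
  [ffun l => \matrix_(i < n1, j < n2) (if (i < k)%N && (j < k)%N then S l i j else 0)].

Definition ttrunc (n1 n2 n3 : nat) (k : nat)
  (U : tensor R n1 n1 n3) (S : tensor R n1 n2 n3) (V : tensor R n2 n2 n3) : tensor R n1 n2 n3 :=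
  tmul (tmul U (tmask k S)) (ttr V).

End Tensors.

(* Main.v *)
Require Import Defs.
From HB Require Import structures.
From mathcomp Require Import all_boot all_order all_algebra.
From mathcomp Require Import reals trigo.
From mathcomp.real_closed Require Import complex.
From mathcomp Require Import ring lra zify.
Set Implicit Arguments.
Unset Strict Implicit.
Unset Printing Implicit Defensive.
Import Order.TTheory GRing.Theory Num.Theory.
Local Open Scope ring_scope.
Section S.
Variable R : realType.
Local Notation C := R[i].
Local Open Scope complex_scope.
Lemma realCB (x y : R) : (x - y)%:C = x%:C - y%:C :> C. Proof. exact: rmorphB. Qed.
Lemma realCD (x y : R) : (x + y)%:C = x%:C + y%:C :> C. Proof. exact: rmorphD. Qed.
Lemma realCM (x y : R) : (x * y)%:C = x%:C * y%:C :> C. Proof. exact: rmorphM. Qed.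
Lemma realC_sum (I : finType) (F : I -> R) : (\sum_i F i)%:C = \sum_i (F i)%:C :> C.
Proof. exact: rmorph_sum. Qed.
Lemma realC_sumP (I : finType) (P : pred I) (F : I -> R) : (\sum_(i | P i) F i)%:C = \sum_(i | P i) (F i)%:C :> C.
Proof. exact: rmorph_sum. Qed.

Definition sq (z : C) : R := complex.Re z ^+ 2 + complex.Im z ^+ 2.
Lemma conj_mul_sq (z : C) : conjc z * z = (sq z)%:C.
Proof. case: z => a b; rewrite /sq /= /GRing.mul /=; apply/eqP; rewrite eq_complex /=; apply/andP; split; apply/eqP; ring. Qed.
Lemma mul_conj_sq (z : C) : z * conjc z = (sq z)%:C.
Proof. by rewrite mulrC conj_mul_sq. Qed.
Lemma sq_ge0 z : 0 <= sq z.
Proof. by rewrite /sq addr_ge0 // sqr_ge0. Qed.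
Lemma sqM (a b : C) : sq (a * b) = sq a * sq b.
Proof. apply: complexI; rewrite realCM. rewrite -!conj_mul_sq rmorphM; ring. Qed.
Lemma sq0 : sq 0 = 0. Proof. by rewrite /sq /= expr0n /= addr0. Qed.
Lemma sq1 : sq 1 = 1. Proof. by rewrite /sq /= expr1n expr0n /= addr0. Qed.
Lemma sqR (x : R) : sq x%:C = x ^+ 2. Proof. by rewrite /sq /= expr0n /= addr0. Qed.

Definition ct m n (X : 'M[C]_(m, n)) : 'M[C]_(n, m) := (map_mx conjc X)^T.
Lemma ctE m n (X : 'M[C]_(m, n)) i j : ct X i j = conjc (X j i).
Proof. by rewrite !mxE. Qed.
Lemma ctM m n p (X : 'M[C]_(m, n)) (Y : 'M[C]_(n, p)) : ct (X *m Y) = ct Y *m ct X.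
Proof. by rewrite /ct map_mxM trmx_mul. Qed.
Lemma ctK m n (X : 'M[C]_(m, n)) : ct (ct X) = X.
Proof. by apply/matrixP=> i j; rewrite !ctE conjcK. Qed.
Lemma ctB m n (X Y : 'M[C]_(m, n)) : ct (X - Y) = ct X - ct Y.
Proof. by apply/matrixP=> i j; rewrite !mxE rmorphB. Qed.
Lemma ct1 n : ct (1%:M : 'M[C]_n) = 1%:M.
Proof. by apply/matrixP=> i j; rewrite ctE !mxE eq_sym conjc_nat. Qed.

Definition hs m n (X : 'M[C]_(m, n)) : R := \sum_i \sum_j sq (X i j).
Lemma hs_ge0 m n (X : 'M[C]_(m, n)) : 0 <= hs X.
Proof. by apply: sumr_ge0 => i _; apply: sumr_ge0 => j _; apply: sq_ge0. Qed.
Lemma hsC m n (X : 'M[C]_(m, n)) : \tr (ct X *m X) = (hs X)%:C.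
Proof.
rewrite /mxtrace /hs exchange_big /= realC_sum; apply: eq_bigr => j _.
rewrite mxE realC_sum; apply: eq_bigr => i _.
by rewrite ctE conj_mul_sq.
Qed.
Lemma hsC' m n (X : 'M[C]_(m, n)) : \tr (X *m ct X) = (hs X)%:C.
Proof. by rewrite mxtrace_mulC hsC. Qed.

Lemma hs_unit_l m n p (U : 'M[C]_(m, n)) (X : 'M[C]_(n, p)) :
  ct U *m U = 1%:M -> hs (U *m X) = hs X.
Proof.
move=> hU; apply: complexI; rewrite -!hsC ctM -mulmxA (mulmxA (ct U)) hU.
by rewrite mul1mx.
Qed.
Lemma hs_unit_r m n p (V : 'M[C]_(p, n)) (X : 'M[C]_(m, n)) :
  ct V *m V = 1%:M -> hs (X *m ct V) = hs X.
Proof.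
move=> hV; apply: complexI; rewrite -!hsC' ctM ctK -mulmxA (mulmxA (ct V)) hV.
by rewrite mul1mx.
Qed.
Lemma hs_proj m n p (Y : 'M[C]_(m, n)) (Z : 'M[C]_(m, p)) :
  ct Y *m Y = 1%:M -> hs (Z - (Y *m ct Y) *m Z) = hs Z - hs (ct Y *m Z).
Proof.
move=> hY; apply: complexI; rewrite realCB -!hsC !ctB !ctM ctK.
rewrite mulmxBl !mulmxBr !(raddfB (@mxtrace _ _)) /=.
have -> : ct Z *m (Y *m ct Y) *m (Y *m ct Y *m Z) = ct Z *m (Y *m ct Y) *m Z.
  by rewrite -!mulmxA (mulmxA (ct Y) Y) hY mul1mx.
by rewrite subrr subr0 !mulmxA.
Qed.

Definition isdiag m n (S : 'M[C]_(m, n)) := forall (i : 'I_m) (j : 'I_n), val i != val j -> S i j = 0.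
Definition colsq m n (S : 'M[C]_(m, n)) j := \sum_i sq (S i j).
Definition rowsq m n (X : 'M[C]_(m, n)) i := \sum_j sq (X i j).

Lemma sq_sum_single (I : finType) (a : I -> C) :
  (forall j j', j != j' -> a j = 0 \/ a j' = 0) -> sq (\sum_j a j) = \sum_j sq (a j).
Proof.
move=> H; case: (pickP (fun j => a j != 0)) => [j0 hj0 | h0].
  rewrite (bigD1 j0) //= big1 ?addr0; last first.
    by move=> j hj; case: (H j0 j); rewrite 1?eq_sym // => h; rewrite h eqxx in hj0.
  rewrite [RHS](bigD1 j0) //= big1 ?addr0 //.
  by move=> j hj; case: (H j0 j); rewrite 1?eq_sym // => h; [rewrite h eqxx in hj0 | rewrite h sq0].
rewrite big1 ?sq0; last by move=> j _; move: (h0 j) => /= /negbFE/eqP.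
by rewrite big1 // => j _; move: (h0 j) => /= /negbFE/eqP ->; rewrite sq0.
Qed.

Lemma hs_diag m n p (S : 'M[C]_(m, n)) (X : 'M[C]_(n, p)) :
  isdiag S -> hs (S *m X) = \sum_j colsq S j * rowsq X j.
Proof.
move=> hS; rewrite /hs.
have e : forall i l, sq ((S *m X) i l) = \sum_j sq (S i j) * sq (X j l).
  move=> i l; rewrite mxE sq_sum_single; first by apply: eq_bigr => j _; rewrite sqM.
  move=> j j' hjj'; case: (eqVneq (val i) (val j)) => hij.
    right; rewrite hS ?mul0r // hij; apply: contra hjj' => /eqP h; apply/eqP/val_inj.
    exact: h.
  by left; rewrite hS ?mul0r.
under eq_bigr => i _ do under eq_bigr => l _ do rewrite e.
under eq_bigr => i _ do rewrite exchange_big /=.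
rewrite exchange_big /=; apply: eq_bigr => j _.
rewrite /colsq /rowsq mulr_suml; apply: eq_bigr => i _.
by rewrite mulr_sumr.
Qed.

Definition Emx m k (hk : (k <= m)%N) : 'M[C]_(m, k) := \matrix_(i, j) (i == widen_ord hk j)%:R.
Definition colk n m k (hk : (k <= m)%N) (M : 'M[C]_(n, m)) : 'M[C]_(n, k) :=
  \matrix_(i, j) M i (widen_ord hk j).

Lemma colkE n m k (hk : (k <= m)%N) (M : 'M[C]_(n, m)) : colk hk M = M *m Emx hk.
Proof.
apply/matrixP=> i j; rewrite !mxE (bigD1 (widen_ord hk j)) //= big1 ?addr0.
  by rewrite !mxE eqxx mulr1.
by move=> l hl; rewrite !mxE (negbTE hl) mulr0.
Qed.

Lemma ctEE m k (hk : (k <= m)%N) : ct (Emx hk) *m Emx hk = 1%:M.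
Proof.
apply/matrixP=> a b; rewrite !mxE (bigD1 (widen_ord hk a)) //= big1 ?addr0.
  rewrite !mxE eqxx conjc_nat mul1r.
  have -> : (widen_ord hk a == widen_ord hk b) = (a == b) by [].
  by [].
by move=> l hl; rewrite !mxE (negbTE hl) conjc0 mul0r.
Qed.

Lemma hs_ctE m n k (hk : (k <= m)%N) (S : 'M[C]_(m, n)) : isdiag S ->
  hs (ct (Emx hk) *m S) = \sum_j (if (val j < k)%N then colsq S j else 0).
Proof.
move=> hS.
have e : forall a j, (ct (Emx hk) *m S) a j = S (widen_ord hk a) j.
  move=> a j; rewrite !mxE (bigD1 (widen_ord hk a)) //= big1 ?addr0.
    by rewrite !mxE eqxx conjc_nat mul1r.
  by move=> l hl; rewrite !mxE (negbTE hl) conjc0 mul0r.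
rewrite /hs; under eq_bigr => a _ do under eq_bigr => j _ do rewrite e.
rewrite -(big_ord_narrow (F := fun i => \sum_j sq (S i j)) hk) exchange_big /=.
apply: eq_bigr => j _; case: ifP => hj.
  rewrite /colsq big_mkcond; apply: eq_bigr => i _; case: ifP => // hi.
  rewrite hS ?sq0 //; apply/eqP => h; by rewrite h hj in hi.
rewrite big1 // => i hi; rewrite hS ?sq0 //; apply/eqP => h; by rewrite -h hi in hj.
Qed.

Definition maskm m n k (S : 'M[C]_(m, n)) : 'M[C]_(m, n) :=
  \matrix_(i, j) (if (i < k)%N && (j < k)%N then S i j else 0).
Definition Dmx n k : 'M[C]_n := \matrix_(i, j) ((i == j) && (j < k)%N)%:R.

Lemma maskD m n k (S : 'M[C]_(m, n)) : isdiag S -> maskm k S = S *m Dmx n k.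
Proof.
move=> hS; apply/matrixP=> i j; rewrite !mxE (bigD1 j) //= big1 ?addr0.
  rewrite !mxE eqxx /=; case: (boolP (j < k)%N) => hj; rewrite ?andbT ?andbF ?mulr1 ?mulr0 //.
  case: (boolP (i < k)%N) => hi //; rewrite hS //; apply/eqP => h; by rewrite h hj in hi.
by move=> l hl; rewrite !mxE (negbTE hl) mulr0.
Qed.

Lemma rowsqD n p k (M : 'M[C]_(p, n)) j :
  rowsq (M *m Dmx n k) j = \sum_l (if (val l < k)%N then sq (M j l) else 0).
Proof.
apply: eq_bigr => l _; rewrite !mxE (bigD1 l) //= big1 ?addr0.
  by rewrite !mxE eqxx /=; case: ifP; rewrite ?mulr1 ?mulr0 ?sq0.
by move=> a ha; rewrite !mxE (negbTE ha) mulr0.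
Qed.

Lemma hs_mask m n k (S : 'M[C]_(m, n)) : hs S = hs (maskm k S) + hs (S - maskm k S).
Proof.
rewrite /hs -[RHS]big_split; apply: eq_bigr => i _; rewrite -[RHS]big_split; apply: eq_bigr => j _ /=.
by rewrite !mxE; case: ifP; rewrite ?subrr ?subr0 ?sq0 ?addr0 ?add0r.
Qed.

Lemma rearr n k (t d : 'I_n -> R) :
  (forall i j : 'I_n, (val i <= val j)%N -> t j <= t i) -> (forall j, 0 <= t j) ->
  (forall j, 0 <= d j <= 1) ->
  \sum_j d j <= \sum_(j : 'I_n) (if (val j < k)%N then 1 else 0) ->
  \sum_j t j * d j <= \sum_(j : 'I_n) (if (val j < k)%N then t j else 0).
Proof.
move=> ht ht0 hd hs.
case: (ltnP k n) => hkn; last first.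
  apply: ler_sum => j _; rewrite (leq_trans (ltn_ord j) hkn).
  have := hd j; have := ht0 j; move=> a /andP[b c]; nra.
pose c := t (Ordinal hkn).
have h1 : \sum_j t j * d j - \sum_(j : 'I_n) (if (val j < k)%N then t j else 0)
    <= c * (\sum_j d j - \sum_(j : 'I_n) (if (val j < k)%N then 1 else 0)).
  rewrite -!sumrB mulr_sumr; apply: ler_sum => j _.
  have := hd j => /andP[a b].
  case: ifP => hj.
    have : c <= t j by apply: ht; rewrite /= ltnW.
    move=> e; nra.
  have : t j <= c by apply: ht; rewrite /= leqNgt hj.
  move=> e; nra.
have h2 : 0 <= c by apply: ht0.
have : c * (\sum_j d j - \sum_(j : 'I_n) (if (val j < k)%N then 1 else 0)) <= 0.
  by rewrite mulr_ge0_le0 // subr_le0.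
move=> h3; lra.
Qed.

Lemma sq_le (x y : C) : 0 <= x -> x <= y -> sq x <= sq y.
Proof.
rewrite !lecE /= => /andP[/eqP hx0 hx] /andP[/eqP hy hxy].
rewrite /sq hy hx0 expr0n /= !addr0; nra.
Qed.

Lemma colsq_ge0 m n (S : 'M[C]_(m, n)) j : 0 <= colsq S j.
Proof. by apply: sumr_ge0 => i _; apply: sq_ge0. Qed.

Lemma colsq_diag m n (S : 'M[C]_(m, n)) (i : 'I_m) (j : 'I_n) :
  isdiag S -> val i = val j -> colsq S j = sq (S i j).
Proof.
move=> hS hij; rewrite /colsq (bigD1 i) //= big1 ?addr0 // => l hl.
rewrite hS ?sq0 // -hij; apply: contra hl => /eqP h; apply/eqP/val_inj.
exact: h.
Qed.

Lemma colsq_out m n (S : 'M[C]_(m, n)) (j : 'I_n) :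
  isdiag S -> (m <= val j)%N -> colsq S j = 0.
Proof.
move=> hS hj; rewrite /colsq big1 // => i _; rewrite hS ?sq0 //.
by apply/eqP => h; have := ltn_ord i; rewrite h ltnNge hj.
Qed.

Lemma colsq_sorted m n (S : 'M[C]_(m, n)) : isdiag S ->
  (forall (i1 i2 : 'I_m) (j1 j2 : 'I_n), val i1 = val j1 -> val i2 = val j2 ->
     (val i1 <= val i2)%N -> 0 <= S i2 j2 /\ S i2 j2 <= S i1 j1) ->
  forall i j : 'I_n, (val i <= val j)%N -> colsq S j <= colsq S i.
Proof.
move=> hS hsort i j hij; case: (ltnP (val j) m) => hj; last by rewrite colsq_out // colsq_ge0.
have hi : (val i < m)%N by apply: leq_ltn_trans hj.
rewrite (colsq_diag (i := Ordinal hj)) // (colsq_diag (i := Ordinal hi)) //.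
have [h1 h2] := hsort (Ordinal hi) (Ordinal hj) i j erefl erefl hij.
exact: sq_le.
Qed.

Lemma unit_rows n (M : 'M[C]_n) : M *m ct M = 1%:M -> forall j, rowsq M j = 1.
Proof.
move=> hM j; apply: complexI; have := congr1 (fun X : 'M[C]_n => X j j) hM.
rewrite !mxE eqxx /= => h; transitivity (1 : C); last by []. apply: (eq_trans _ h); rewrite /rowsq realC_sum; apply: eq_bigr => l _.
by rewrite ctE mul_conj_sq.
Qed.

Lemma unit_cols n (M : 'M[C]_n) : ct M *m M = 1%:M -> forall j, colsq M j = 1.
Proof.
move=> hM j; apply: complexI; have := congr1 (fun X : 'M[C]_n => X j j) hM.
rewrite !mxE eqxx /= => h; transitivity (1 : C); last by []. apply: (eq_trans _ h); rewrite /colsq realC_sum; apply: eq_bigr => l _.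
by rewrite !mxE conj_mul_sq.
Qed.

Lemma slice n1 n2 m k (hk : (k <= m)%N) (A : 'M[C]_(n1, n2)) (Q : 'M[C]_(n1, m))
  (UA : 'M[C]_n1) (SA : 'M[C]_(n1, n2)) (VA : 'M[C]_n2)
  (UC : 'M[C]_m) (SC : 'M[C]_(m, n2)) (VC : 'M[C]_n2) :
  ct Q *m Q = 1%:M -> ct UA *m UA = 1%:M -> ct VA *m VA = 1%:M -> VA *m ct VA = 1%:M ->
  ct UC *m UC = 1%:M -> ct VC *m VC = 1%:M -> VC *m ct VC = 1%:M ->
  A = UA *m SA *m ct VA -> ct Q *m A = UC *m SC *m ct VC -> isdiag SA -> isdiag SC ->
  (forall (i1 i2 : 'I_m) (j1 j2 : 'I_n2), val i1 = val j1 -> val i2 = val j2 ->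
     (val i1 <= val i2)%N -> 0 <= SC i2 j2 /\ SC i2 j2 <= SC i1 j1) ->
  hs (A - (colk hk (Q *m UC) *m ct (colk hk (Q *m UC))) *m A)
  <= hs (UA *m maskm k SA *m ct VA - (Q *m ct Q) *m (UA *m maskm k SA *m ct VA))
     + hs (A - UA *m maskm k SA *m ct VA).
Proof.
move=> hQ hUA hVA hVA' hUC hVC hVC' hA hC hSA hSC hsort.
set Ak := UA *m maskm k SA *m ct VA.
set Uk := colk hk (Q *m UC).
have hUk : ct Uk *m Uk = 1%:M.
  rewrite /Uk colkE !ctM -!mulmxA (mulmxA (ct Q)) hQ mul1mx (mulmxA (ct UC)) hUC mul1mx.
  exact: ctEE.
have e4 : hs (ct Uk *m A) = \sum_(j : 'I_n2) (if (val j < k)%N then colsq SC j else 0).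
  rewrite /Uk colkE !ctM -!mulmxA hC !mulmxA -(mulmxA _ (ct UC) UC) hUC mulmx1.
  by rewrite hs_unit_r // hs_ctE.
have e3 : hs (A - Ak) = hs A - hs Ak.
  have -> : A - Ak = UA *m (SA - maskm k SA) *m ct VA by rewrite hA /Ak mulmxBr mulmxBl.
  rewrite hA /Ak !hs_unit_r // !hs_unit_l // (hs_mask k SA); ring.
have hAV : A *m VA = UA *m SA by rewrite hA -mulmxA hVA mulmx1.
pose M := ct VC *m VA.
have e5 : hs (ct Q *m Ak) = \sum_j colsq SC j * rowsq (M *m Dmx n2 k) j.
  rewrite /Ak maskD // (mulmxA UA) -hAV -!mulmxA (mulmxA (ct Q)) hC.
  rewrite !mulmxA hs_unit_r // -!mulmxA hs_unit_l // hs_diag // /M !mulmxA.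
rewrite !hs_proj // e4 e3 e5.
suff : \sum_j colsq SC j * rowsq (M *m Dmx n2 k) j
   <= \sum_(j : 'I_n2) (if (val j < k)%N then colsq SC j else 0) by move=> h; lra.
have hM : M *m ct M = 1%:M.
  by rewrite /M ctM ctK -mulmxA (mulmxA VA) hVA' mul1mx hVC.
have hM' : ct M *m M = 1%:M.
  by rewrite /M ctM ctK -mulmxA (mulmxA VC) hVC' mul1mx hVA.
apply: rearr.
- exact: colsq_sorted.
- by move=> j; apply: colsq_ge0.
- move=> j; rewrite rowsqD; apply/andP; split.
    by apply: sumr_ge0 => l _; case: ifP => _ //; apply: sq_ge0.
  rewrite -(unit_rows hM j); apply: ler_sum => l _; case: ifP => _ //; exact: sq_ge0.
- under eq_bigr => j _ do rewrite rowsqD.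
  rewrite exchange_big /=; apply: ler_sum => l _; case: ifP => _; last by rewrite big1.
  by rewrite -(unit_cols hM' l).
Qed.
End S.

Local Close Scope ring_scope.

Lemma modn_lt2 x n : (x < n.*2)%N -> (n <= x)%N -> x %% n = (x - n)%N.
Proof.
move=> h1 h2; have -> : x = ((x - n) + n)%N by lia.
rewrite modnDr modn_small; lia.
Qed.

Definition ordadd (n : nat) (a l : 'I_n) : 'I_n :=
  Ordinal (ltn_pmod (a + l) (ord_pos a)).

Lemma ordsub_add n (a l : 'I_n) : ordsub (ordadd a l) l = a.
Proof.
apply: val_inj => /=; have ha := ltn_ord a; have hl := ltn_ord l.
case: (ltnP (a + l) n) => h.
  rewrite (modn_small h); have -> : (a + l + n - l = a + n)%N by lia.
  by rewrite modnDr modn_small.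
rewrite (@modn_lt2 (a + l)) //; last by lia.
rewrite modn_small; lia.
Qed.

Lemma ordadd_inj n (l : 'I_n) : injective (fun a => ordadd a l).
Proof. by move=> a b h; rewrite -(ordsub_add a l) h ordsub_add. Qed.

Lemma ordneg_add n (a : 'I_n) : ((ordneg a + a) %% n = 0)%N.
Proof.
rewrite /=; have ha := ltn_ord a; case: (posnP a) => h.
  by rewrite h subn0 modnn add0n mod0n.
rewrite (@modn_small (n - a)); last by lia.
have -> : (n - a + a = n)%N by lia.
by rewrite modnn.
Qed.

Lemma ordnegK n (a : 'I_n) : ordneg (ordneg a) = a.
Proof.
apply: val_inj => /=; have ha := ltn_ord a; case: (posnP a) => h.
  by rewrite h subn0 modnn subn0 modnn.
rewrite (@modn_small (n - a)); last by lia.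
rewrite modn_small; lia.
Qed.

Lemma ordneg_eq n (a b : 'I_n) : ((ordneg a + b) %% n = 0)%N -> a = b.
Proof.
move=> H; apply: val_inj; have ha := ltn_ord a; have hb := ltn_ord b.
move: H; rewrite /=; case: (posnP a) => h.
  by rewrite h subn0 modnn add0n modn_small.
rewrite (@modn_small (n - a)); last by lia.
case: (ltnP (n - a + b) n) => h2.
  rewrite modn_small //; lia.
rewrite modn_lt2; lia.
Qed.

Local Open Scope ring_scope.
Section Om.
Variable R : realType.
Local Notation C := R[i].
Local Open Scope complex_scope.

Lemma mulcE (a b c d : R) : (a +i* b) * (c +i* d) = (a * c - b * d) +i* (a * d + b * c) :> C.
Proof. by []. Qed.

Lemma cis_mul (a b : R) : (cos a -i* sin a) * (cos b -i* sin b) = cos (a + b) -i* sin (a + b) :> C.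
Proof.
rewrite mulcE cosD sinD; apply/eqP; rewrite eq_complex /=; apply/andP; split; apply/eqP; ring.
Qed.

Local Notation w n := (omega R n).
Local Notation th n := (2 * pi / (n%:R : R)).

Lemma omegaX n d : w n ^+ d = cos (d%:R * th n) -i* sin (d%:R * th n).
Proof.
elim: d => [|d IH].
  rewrite expr0 mul0r cos0 sin0; apply/eqP; rewrite eq_complex /= oppr0 !eqxx //.
rewrite exprS IH /omega cis_mul; congr (cos _ -i* sin _); rewrite [d.+1%:R]mulrS; ring.
Qed.

Lemma omega_n n : w n ^+ n = 1.
Proof.
case: n => [|n]; first by rewrite expr0.
rewrite omegaX mulrCA mulrV ?mulr1; last by rewrite unitfE pnatr_eq0.
have -> : (2 * pi : R) = pi *+ 2 by rewrite mulr_natl.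
by rewrite cos2pi sin2pi; apply/eqP; rewrite eq_complex /= oppr0 !eqxx.
Qed.

Lemma omega_conj n : conjc (w n) * w n = 1.
Proof.
rewrite conj_mul_sq /sq /omega /= sqrrN cos2Dsin2 //.
Qed.

Lemma omegaX_conj n x : conjc (w n ^+ x) * w n ^+ x = 1.
Proof. by rewrite rmorphXn -exprMn omega_conj expr1n. Qed.

Lemma omega_mod n x : w n ^+ x = w n ^+ (x %% n)%N.
Proof.
rewrite {1}(divn_eq x n) exprD mulnC exprM omega_n expr1n mul1r //.
Qed.

Lemma omega_eqmod n x y : (x = y %[mod n])%N -> w n ^+ x = w n ^+ y.
Proof. by move=> h; rewrite omega_mod h -omega_mod. Qed.

Lemma omega_prim n d : (0 < d < n)%N -> w n ^+ d != 1.
Proof.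
move=> /andP[hd hdn]; rewrite omegaX; apply/negP => /eqP heq.
have := congr1 (@complex.Im R) heq; rewrite /= => /eqP; rewrite oppr_eq0 => /eqP hs.
have := congr1 (@complex.Re R) heq; rewrite /= => hc.
have hn : (0 < n%:R :> R) by rewrite ltr0n; lia.
set x := d%:R * th n.
have hx0 : 0 < x.
  by rewrite /x mulr_gt0 ?ltr0n // divr_gt0 // mulr_gt0 // pi_gt0.
have hx2 : x < pi *+ 2.
  have hdn' : d%:R / n%:R < 1 :> R by rewrite ltr_pdivrMr // mul1r ltr_nat.
  have -> : x = (2 * pi) * (d%:R / n%:R) by rewrite /x; ring.
  have := pi_gt0 R; rewrite -mulr_natl; nra.
case: (ltgtP x pi) => h.
- have : 0 < sin x by apply: sin_gt0_pi; rewrite hx0 h.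
  by rewrite hs ltxx.
- have : 0 < sin (x - pi) by apply: sin_gt0_pi; rewrite subr_gt0 h /=; lra.
  have -> : sin (x - pi) = - sin x.
    by rewrite sinB cospi sinpi; ring.
  by rewrite hs oppr0 ltxx.
- by move: hc; rewrite -/x h cospi; lra.
Qed.

Lemma conj_omega n j (a : 'I_n) : conjc (w n ^+ (j * a)) = w n ^+ (j * ordneg a).
Proof.
have h1 : w n ^+ (j * ordneg a) * w n ^+ (j * a) = 1.
  rewrite -exprD -mulnDr (@omega_eqmod n _ 0); first by rewrite expr0.
  by rewrite -modnMmr ordneg_add muln0.
by rewrite -[LHS]mulr1 -h1 mulrCA omegaX_conj mulr1.
Qed.

Lemma orth n (l l' : 'I_n) :
  \sum_(j < n) conjc (w n ^+ (j * l)) * w n ^+ (j * l') = (l == l')%:R * n%:R.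
Proof.
under eq_bigr => j _ do rewrite conj_omega -exprD -mulnDr mulnC exprM.
case: (eqVneq l l') => [<-|hne].
  rewrite omega_mod ordneg_add expr0; under eq_bigr => j _ do rewrite expr1n.
  by rewrite sumr_const card_ord mul1r.
rewrite mul0r.
set y := (ordneg l + l')%N.
have hz : w n ^+ y = w n ^+ (y %% n)%N by apply: omega_mod.
have hy : (0 < y %% n < n)%N.
  rewrite ltn_pmod ?(ord_pos l) // andbT lt0n; apply/negP => /eqP h.
  by move: hne; rewrite (ordneg_eq h) eqxx.
have hz1 : w n ^+ y != 1 by rewrite hz; apply: omega_prim.
have hzn : (w n ^+ y) ^+ n = 1 by rewrite -exprM mulnC exprM omega_n expr1n.
have := subrX1 (w n ^+ y) n; rewrite hzn subrr => /esym /eqP.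
by rewrite mulf_eq0 subr_eq0 (negbTE hz1) /= => /eqP.
Qed.
End Om.

Section DFT.
Variable R : realType.
Local Notation C := R[i].
Local Open Scope complex_scope.
Local Notation w n := (omega R n).

Lemma realCn (n : nat) : (n%:R : R)%:C = n%:R :> C.
Proof. exact: rmorph_nat. Qed.
Lemma realC_sq (x : R) : (x ^+ 2)%:C = x%:C * x%:C :> C.
Proof. by rewrite expr2 realCM. Qed.

Lemma conjc_sum (I : finType) (F : I -> C) : conjc (\sum_i F i) = \sum_i conjc (F i).
Proof. exact: rmorph_sum. Qed.
Lemma conjcM (x y : C) : conjc (x * y) = conjc x * conjc y.
Proof. exact: rmorphM. Qed.

Lemma tdftE n1 n2 n3 (X : tensor R n1 n2 n3) j a b :
  tdft X j a b = \sum_(l < n3) w n3 ^+ (j * l) * (X l a b)%:C.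
Proof. by rewrite /tdft summxE; apply: eq_bigr => l _; rewrite !mxE. Qed.

Lemma tdft_sub n1 n2 n3 (X Y : tensor R n1 n2 n3) j :
  tdft (tsub X Y) j = tdft X j - tdft Y j.
Proof.
apply/matrixP=> a b; rewrite !mxE !tdftE -sumrB; apply: eq_bigr => l _.
by rewrite ffunE !mxE realCB mulrBr.
Qed.

Lemma tmulE n1 n2 n4 n3 (X : tensor R n1 n2 n3) (Y : tensor R n2 n4 n3) k :
  tmul X Y k = \sum_l X (ordsub k l) *m Y l.
Proof. by rewrite ffunE. Qed.

Lemma tdft_mul n1 n2 n4 n3 (X : tensor R n1 n2 n3) (Y : tensor R n2 n4 n3) j :
  tdft (tmul X Y) j = tdft X j *m tdft Y j.
Proof.
rewrite /tdft mulmx_suml.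
under [RHS]eq_bigr => a _ do rewrite mulmx_sumr.
under [LHS]eq_bigr => k _ do rewrite tmulE map_mx_sum scaler_sumr.
rewrite exchange_big [RHS]exchange_big /=; apply: eq_bigr => l _.
rewrite (reindex_inj (@ordadd_inj n3 l)) /=; apply: eq_bigr => a _.
rewrite ordsub_add map_mxM -scalemxAl -scalemxAr scalerA -exprD.
congr (_ *: _); apply: omega_eqmod => /=.
by rewrite modnMmr mulnDr.
Qed.

Lemma tdft_tr n1 n2 n3 (X : tensor R n1 n2 n3) j :
  tdft (ttr X) j = ct (tdft X j).
Proof.
apply/matrixP=> a b; rewrite ctE !tdftE conjc_sum.
rewrite (reindex_inj (can_inj (@ordnegK n3))) /=; apply: eq_bigr => l _.
by rewrite ffunE !mxE ordnegK conjcM conjc_real conj_omega.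
Qed.

Lemma tdft_id n n3 j : tdft (tid R n n3) j = 1%:M.
Proof.
apply/matrixP=> a b; rewrite tdftE (bigD1 (Ordinal (ord_pos j))) //= big1 ?addr0.
  by rewrite ffunE /= muln0 expr0 mul1r !mxE realCn.
move=> l hl; rewrite ffunE; case: ifP => h; last by rewrite mxE mulr0.
by move: hl; have -> : l = Ordinal (ord_pos j) by apply: val_inj; apply/eqP.
Qed.

Lemma tdft_first n1 m n3 k (hk : (k <= m)%N) (X : tensor R n1 m n3) j :
  tdft (tfirst hk X) j = colk hk (tdft X j).
Proof. by apply/matrixP=> a b; rewrite !mxE !tdftE; apply: eq_bigr => l _; rewrite ffunE mxE. Qed.

Lemma tdft_mask n1 n2 n3 k (S : tensor R n1 n2 n3) j :
  tdft (tmask k S) j = maskm k (tdft S j).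
Proof.
apply/matrixP=> a b; rewrite !mxE !tdftE; case: ifP => h.
  by apply: eq_bigr => l _; rewrite ffunE mxE h.
by rewrite big1 // => l _; rewrite ffunE mxE h mulr0.
Qed.

Lemma tdft_diag n1 n2 n3 (S : tensor R n1 n2 n3) j : fdiagonal S -> isdiag (tdft S j).
Proof. by move=> hS a b hab; rewrite tdftE big1 // => l _; rewrite hS // mulr0. Qed.

Lemma parseval1 n (x : 'I_n -> R) :
  \sum_(j < n) sq (\sum_(l < n) w n ^+ (j * l) * (x l)%:C) = n%:R * \sum_l x l ^+ 2.
Proof.
apply: complexI; rewrite realC_sum realCM realCn realC_sum.
under [LHS]eq_bigr => j _ do rewrite -conj_mul_sq conjc_sum mulr_suml.
under [LHS]eq_bigr => j _ do under eq_bigr => l _ do rewrite mulr_sumr.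
rewrite exchange_big /= mulr_sumr; apply: eq_bigr => l _.
rewrite exchange_big /= (bigD1 l) //= [X in _ + X]big1 ?addr0.
  under eq_bigr => j _ do rewrite conjcM conjc_real mulrACA.
  by rewrite -mulr_suml orth eqxx mul1r realC_sq.
move=> l' hl; under eq_bigr => j _ do rewrite conjcM conjc_real mulrACA.
by rewrite -mulr_suml orth eq_sym (negbTE hl) !mul0r.
Qed.

Lemma parseval n1 n2 n3 (X : tensor R n1 n2 n3) :
  \sum_(j < n3) hs (tdft X j) = n3%:R * tfrob X ^+ 2.
Proof.
rewrite /tfrob sqr_sqrtr; last first.
  by apply: sumr_ge0 => k _; apply: sumr_ge0 => i _; apply: sumr_ge0 => j _; apply: sqr_ge0.
rewrite /hs exchange_big /= (exchange_big _ _ _ _ _ (fun k i => \sum_j X k i j ^+ 2)) /= mulr_sumr.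
apply: eq_bigr => a _; rewrite exchange_big /=.
rewrite (exchange_big _ _ _ _ _ (fun k j => X k a j ^+ 2)) /= mulr_sumr.
apply: eq_bigr => b _; rewrite -parseval1; apply: eq_bigr => j _.
by rewrite tdftE.
Qed.
End DFT.

Local Open Scope ring_scope.
Unset Implicit Arguments.

Theorem theorem3 (R : realType) (n1 n2 n3 q s m k : nat)
  (A : tensor R n1 n2 n3) (B : tensor R n2 s n3) (Q : tensor R n1 m n3)
  (* T-SVD of A, defining A_k and A_{k,perp} *)
  (UA : tensor R n1 n1 n3) (SA : tensor R n1 n2 n3) (VA : tensor R n2 n2 n3)
  (* T-SVD of C = Q^T * A *)
  (UC : tensor R m m n3) (SC : tensor R m n2 n3) (VC : tensor R n2 n2 n3)
  (hk : (k <= m)%N) :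
  let AAt := tmul A (ttr A) in
  let K := tconcat (fun j : 'I_q.+1 => tmul (tmul (tpow AAt j) A) B) in
  (* Q is the orthonormal factor of a T-QR factorization of K *)
  tmul (ttr Q) Q = tid R m n3 ->
  (exists Rf : tensor R m (\sum_(j < q.+1) s) n3, fuppertri Rf /\ K = tmul Q Rf) ->
  is_tsvd A UA SA VA ->
  let C := tmul (ttr Q) A in
  is_tsvd C UC SC VC ->
  let Uhat := tmul Q UC in
  let Uhatk := tfirst hk Uhat in
  let Ak := ttrunc k UA SA VA in
  let Akperp := tsub A Ak in
  tfrob (tsub A (tmul (tmul Uhatk (ttr Uhatk)) A)) ^+ 2
  <= tfrob (tsub Ak (tmul (tmul Q (ttr Q)) Ak)) ^+ 2 + tfrob Akperp ^+ 2.
Proof.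
move=> AAt K hQ _ [hUA hVA hSA hA _] Cc [hUC hVC hSC hC hsort].
cbv zeta; rewrite /ttrunc.
case: (posnP n3) => hn3.
  subst n3; rewrite /tfrob !big_ord0 sqrtr0 expr0n /= addr0 //.
set L := tsub A _; set R1 := tsub _ _; set R2 := tsub A _.
have key : forall f, hs (tdft L f) <= hs (tdft R1 f) + hs (tdft R2 f).
  move=> f; rewrite /L /R1 /R2 !(tdft_sub, tdft_mul, tdft_tr, tdft_first, tdft_mask).
  have ortho : forall n (U : tensor R n n n3), torthogonal U ->
      ct (tdft U f) *m tdft U f = 1%:M /\ tdft U f *m ct (tdft U f) = 1%:M.
    move=> n U [h1 h2]; split.
      by rewrite -tdft_tr -tdft_mul h1 tdft_id.
    by rewrite -tdft_tr -tdft_mul h2 tdft_id.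
  have [hUA1 _] := ortho _ _ hUA.
  have [hVA1 hVA2] := ortho _ _ hVA.
  have [hUC1 _] := ortho _ _ hUC.
  have [hVC1 hVC2] := ortho _ _ hVC.
  have hQ1 : ct (tdft Q f) *m tdft Q f = 1%:M.
    by rewrite -tdft_tr -tdft_mul hQ tdft_id.
  apply: (@slice R n1 n2 m k hk _ _ _ _ _ _ (tdft SC f) (tdft VC f)) => //.
  - by rewrite hA !(tdft_mul, tdft_tr).
  - by rewrite -tdft_tr -tdft_mul -/Cc hC !(tdft_mul, tdft_tr).
  - exact: tdft_diag.
  - exact: tdft_diag.
  - exact: hsort.
have hsum : \sum_f hs (tdft L f) <= \sum_f hs (tdft R1 f) + \sum_f hs (tdft R2 f).
  by rewrite -big_split; apply: ler_sum => f _; apply: key.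
rewrite !parseval -mulrDr in hsum.
by rewrite -(ler_pM2l (x := n3%:R)) ?ltr0n.
Qed.
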